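(* Let $r\ge 1$, $n\ge 1$ and $k\ge 0$ be integers and let $s:[n]\to\{0,1,\dots,r\}$. The simplicial complex $C_s(n,k,\dots,k)$ (with $k$ repeated $r$ times) is non-empty if and only if $\sum_{i=1}^n s(i)\ge rk$.
   Context: For $\mathbf{k}=(k_1,\dots,k_r)$ with $k_i\ge 0$ and $s:[n]\to\{0,\dots,r\}$, the complex $C_s(n,\mathbf{k})$ has as vertices the $r$-tuples $(A_1,\dots,A_r)$ of subsets of $[n]$ such that $|A_j|\ge k_j$ for all $j$ and, for each $x\in[n]$, the number of $1\le j\le r$ with $x\in A_j$ is exactly $s(x)$. A set of vertices $\{(A_1^i,\dots,A_r^i)\}_{i\in I}$ is a face iff $|\bigcap_{i\in I}A_j^i|\ge k_j$ for all $j=1,\dots,r$. Non-empty means it has at least one vertex. *)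

(* Defs.v *)
From mathcomp Require Import all_boot.
Set Implicit Arguments. Unset Strict Implicit. Unset Printing Implicit Defensive.

(* [n] is 'I_n, indices 1..r are 'I_r.  A vertex candidate is an r-tuple
   (A_1,...,A_r) of subsets of [n], encoded as a finite function. *)
Definition tuple_sets (n r : nat) := {ffun 'I_r -> {set 'I_n}}.

Definition is_vertex (n r : nat) (k : 'I_r -> nat) (s : 'I_n -> nat)
  (A : tuple_sets n r) : Prop :=
  (forall j : 'I_r, k j <= #|A j|) /\
  (forall x : 'I_n, #|[set j : 'I_r | x \in A j]| = s x).

Definition is_face (n r : nat) (k : 'I_r -> nat) (s : 'I_n -> nat)
  (F : {set tuple_sets n r}) : Prop :=
  (forall A, A \in F -> is_vertex k s A) /\
  (forall j : 'I_r, k j <= #|\bigcap_(A in F) A j|).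

Definition C_nonempty (n r : nat) (k : 'I_r -> nat) (s : 'I_n -> nat) : Prop :=
  exists F : {set tuple_sets n r}, is_face k s F /\ F != set0.

(* Main.v *)
Require Import Defs.
From mathcomp Require Import all_boot.
From mathcomp Require Import zify.

Lemma mod_inj (p c1 c2 r : nat) : c1 < r -> c2 < r ->
  (p + c1) %% r = (p + c2) %% r -> c1 = c2.
Proof. by move=> h1 h2 /eqP; rewrite eqn_modDl !modn_small // => /eqP. Qed.

Lemma card_sum (T : finType) (B : {set T}) : #|B| = \sum_(t : T) (t \in B : nat).
Proof.
rewrite -sum1_card big_mkcond /=; apply: eq_bigr => t _; by case: (t \in B).
Qed.

Lemma dcount n r (A : tuple_sets n r) :
  \sum_(j < r) #|A j| = \sum_(x < n) #|[set j | x \in A j]|.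
Proof.
rewrite (eq_bigr (fun j => \sum_(x < n) (x \in A j : nat))); last first.
  by move=> j _; rewrite card_sum.
rewrite exchange_big /=; apply: eq_bigr => x _; rewrite card_sum.
by apply: eq_bigr => j _; rewrite inE.
Qed.

Lemma construct (r n k : nat) (s : 'I_n.+1 -> nat) : 0 < r ->
  (forall x, s x <= r) -> r * k <= \sum_(i < n.+1) s i ->
  exists A : tuple_sets n.+1 r, is_vertex (fun _ => k) s A.
Proof.
move=> rpos sle hk.
pose g := fun i => s (inord i).
pose F := fun m => \sum_(0 <= i < m) g i.
have owner: forall m t, t < F m -> exists2 i, i < m & F i <= t < F i + g i.
  elim=> [|m IH] t; first by rewrite /F big_nil.
  rewrite /F big_nat_recr //= -/(F m) => ht.
  case: (ltnP t (F m)) => h.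
    by case: (IH t h) => i hi hh; exists i => //; apply: ltnW.
  by exists m => //; rewrite h.
have hN : \sum_(i < n.+1) s i = F n.+1.
  by rewrite /F big_mkord; apply: eq_bigr => i _; rewrite /g inord_val.
rewrite hN in hk.
pose A : tuple_sets n.+1 r :=
  [ffun j : 'I_r => [set x : 'I_n.+1 | [exists c : 'I_(s x), (F x + c) %% r == j]]].
exists A; split.
- move=> j.
  pose pk (i : 'I_k) := odflt ord0 [pick x : 'I_n.+1 | F x <= i * r + j < F x + s x].
  have Hpk: forall i : 'I_k, F (pk i) <= i*r+j < F (pk i) + s (pk i).
    move=> i; rewrite /pk; case: pickP => [x hx //|H]; exfalso.
    have ht : i*r + j < F n.+1.
      apply: (leq_trans _ hk).
      have hi : i.+1 <= k := ltn_ord i.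
      have hj : j < r := ltn_ord j.
      have : r * i.+1 <= r * k by rewrite leq_mul2l hi orbT.
      rewrite mulnS mulnC; lia.
    case: (owner _ _ ht) => m hm hh.
    have := H (inord m); rewrite /= inordK //.
    by rewrite /g in hh; rewrite hh.
  have Hc : forall i : 'I_k, i*r + j - F (pk i) < s (pk i).
    by move=> i; have := Hpk i; lia.
  have Hm : forall i : 'I_k, (F (pk i) + (i*r + j - F (pk i))) %% r = j.
    move=> i; have := Hpk i; case/andP => h1 _.
    by rewrite subnKC // modnMDl modn_small.
  have inj : injective pk.
    move=> i1 i2 e.
    have c1 := Hc i1; have c2 := Hc i2; have m1 := Hm i1; have m2 := Hm i2.
    have p1 := Hpk i1; have p2 := Hpk i2.
    rewrite e in c1 m1 p1.
    have := sle (pk i2) => sl.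
    have := mod_inj _ _ _ _ (leq_trans c1 sl) (leq_trans c2 sl) (etrans m1 (esym m2)).
    move=> ee; apply: val_inj => /=.
    have ee2 : i1 * r = i2 * r by move: ee p1 p2; lia.
    by apply/eqP; rewrite -(eqn_pmul2r rpos) ee2.
  rewrite -{1}(card_ord k) -(card_imset (mem 'I_k) inj).
  apply: subset_leq_card; apply/subsetP => y /imsetP [i _ ->].
  rewrite ffunE inE; apply/existsP; exists (Ordinal (Hc i)) => /=.
  by rewrite Hm.
- move=> x.
  pose f (c : 'I_(s x)) : 'I_r := Ordinal (ltn_pmod (F x + c) rpos).
  have injf : injective f.
    move=> c1 c2 /(congr1 val) /= e; apply: val_inj => /=.
    exact: (mod_inj _ _ _ _ (leq_trans (ltn_ord c1) (sle x)) (leq_trans (ltn_ord c2) (sle x)) e).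
  rewrite -{1}(card_ord (s x)) -(card_imset (mem 'I_(s x)) injf).
  apply: eq_card => j; rewrite !inE ffunE inE.
  apply/existsP/imsetP => [[c hc] | [c _ ->]].
    by exists c => //; apply: val_inj; rewrite /= (eqP hc).
  by exists c.
Qed.

Theorem mainTheorem4 (r n k : nat) (s : 'I_n -> nat) :
  1 <= r -> 1 <= n -> (forall x : 'I_n, s x <= r) ->
  (C_nonempty (fun _ : 'I_r => k) s <-> r * k <= \sum_(i < n) s i).
Proof.
move=> rpos npos sle; split.
- case=> F [[hv _] /set0Pn [A hA]].
  case: (hv A hA) => hk hs.
  rewrite -(card_ord r) -sum_nat_const.
  rewrite (eq_bigr (fun x => #|[set j | x \in A j]|)); last by move=> x _; rewrite hs.
  rewrite -dcount; exact: leq_sum.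
- case: n s sle npos => [//|n] s sle _ hk.
  case: (construct _ _ _ _ rpos sle hk) => A hA.
  exists [set A]; split; last by apply/set0Pn; exists A; rewrite inE.
  split; first by move=> B; rewrite inE => /eqP ->.
  by move=> j; rewrite big_set1; case: hA.
Qed.
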